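(* Let $N=(V,E)$ be a rooted DAG, let $E_T$ and $E_N$ be its sets of tree arcs and network arcs, respectively, and let $N^*=(V,E^* )$ be the directed graph with $E^*=E\cup E_N^{-1}$, where $E_N^{-1}=\{(v,u)\mid (u,v)\in E_N\}$. The following are equivalent: (i) $N$ is strongly time consistent; (ii) $N^*$ has no cycle containing some tree arc of $N$; (iii) $N$ admits a temporal representation.
   Context: In a DAG, a tree node is a node of in-degree at most 1 and a hybrid node one of in-degree greater than 1; the root is the (unique) node of in-degree 0. A tree arc is an arc whose head is a tree node; a network arc is an arc whose head is a hybrid node. A path in a directed graph is a sequence of nodes $(v_0,\dots,v_k)$ with each $(v_{i-1},v_i)$ an arc; it is a cycle if $v_k=v_0$ (and $k\ge1$). $N$ is strongly time consistent if for any two nodes $x,y$ for which there exists a sequence of nodes $(v_0,\dots,v_k)$ with $v_0=x$, $v_k=y$, such that for every $i=0,\dots,k-1$ either $(v_i,v_{i+1})\in E$ or $(v_{i+1},v_i)$ is a network arc of $N$, and at least one pair $(v_i,v_{i+1})$ is a tree arc of $N$, the nodes $x$ and $y$ do not have a hybrid child in common. A temporal representation of $N$ is a map $\tau:V\to\mathbb{N}$ such that $\tau(r)=0$ for the root $r$, $\tau(u)<\tau(v)$ for every $(u,v)\in E_T$, and $\tau(u)=\tau(v)$ for every $(u,v)\in E_N$. *)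

(* Defs.v *)
(* A directed graph N = (V,E) is a finite type V with an
   arc relation E : rel V (no multi-arcs). *)
From mathcomp Require Import all_boot.
Set Implicit Arguments. Unset Strict Implicit. Unset Printing Implicit Defensive.

Section Net.
Variables (V : finType) (E : rel V).

Definition indeg (v : V) : nat := #|[pred u | E u v]|.

Definition tree_node (v : V) : bool := indeg v <= 1.
Definition hybrid_node (v : V) : bool := 1 < indeg v.

Definition is_root (r : V) : bool := indeg r == 0.

Definition tree_arc (u v : V) : bool := E u v && tree_node v.
Definition network_arc (u v : V) : bool := E u v && hybrid_node v.

Definition has_cycle (e : rel V) : Prop :=
  exists (x : V) (p : seq V), p != [::] /\ path e x p /\ last x p = x.

Definition rooted_DAG : Prop :=
  ~ has_cycle E /\ exists r : V, is_root r /\ forall v, is_root v -> v = r.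

Definition Estar (u v : V) : bool := E u v || network_arc v u.

Definition has_tree_step (x : V) (p : seq V) : bool :=
  has (fun uv : V * V => tree_arc uv.1 uv.2) (zip (x :: p) p).

Definition strongly_time_consistent : Prop :=
  forall (x y : V) (p : seq V),
    path Estar x p -> last x p = y -> has_tree_step x p ->
    ~ (exists h : V, [&& hybrid_node h, E x h & E y h]).

Definition no_tree_cycle_in_Nstar : Prop :=
  ~ (exists (x : V) (p : seq V),
       [/\ p != [::], path Estar x p, last x p = x & has_tree_step x p]).

Definition temporal_representation (tau : V -> nat) : Prop :=
  [/\ forall r, is_root r -> tau r = 0,
      forall u v, tree_arc u v -> tau u < tau v
    & forall u v, network_arc u v -> tau u = tau v].

End Net.

(* Main.v *)
Require Import Defs.
From mathcomp Require Import all_boot.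
From mathcomp Require Import zify.
From Stdlib Require ClassicalEpsilon.
Set Implicit Arguments. Unset Strict Implicit. Unset Printing Implicit Defensive.

Definition pb (P : Prop) : bool := if ClassicalEpsilon.excluded_middle_informative P then true else false.
Lemma pbP (P : Prop) : reflect P (pb P).
Proof. rewrite /pb; case: ClassicalEpsilon.excluded_middle_informative => h; by constructor. Qed.

Section S.
Variables (V : finType) (E : rel V).

Lemma hts_cons x y p : has_tree_step E x (y :: p) = tree_arc E x y || has_tree_step E y p.
Proof. by []. Qed.

Lemma hts_nil x : has_tree_step E x [::] = false.
Proof. by []. Qed.

Lemma hts_cat x p q : has_tree_step E x (p ++ q) = has_tree_step E x p || has_tree_step E (last x p) q.
Proof. elim: p x => [|y p IH] x /=; first by []. by rewrite !hts_cons IH orbA. Qed.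

Lemma hts_sub x p : has_tree_step E x p -> p != [::].
Proof. by case: p. Qed.

Lemma hybridN v : hybrid_node E v = ~~ tree_node E v.
Proof. by rewrite /hybrid_node /tree_node ltnNge. Qed.

Lemma tau_step tau (Ht : temporal_representation E tau) x y :
  Estar E x y -> tau x + tree_arc E x y <= tau y.
Proof.
case: Ht => _ Htr Hnet.
rewrite /Estar => /orP [Exy|Hn].
- case Hty: (tree_node E y).
  + have Ha: tree_arc E x y by rewrite /tree_arc Exy Hty.
    rewrite Ha addn1. exact: Htr.
  + have Hn: network_arc E x y by rewrite /network_arc Exy hybridN Hty.
    by rewrite /tree_arc Hty andbF addn0 (Hnet _ _ Hn).
- rewrite (Hnet _ _ Hn). case Ha: (tree_arc E x y); last by rewrite addn0.
  by have := Htr _ _ Ha; rewrite (Hnet _ _ Hn) ltnn.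
Qed.

Lemma tau_path tau (Ht : temporal_representation E tau) x p :
  path (Estar E) x p -> tau x + has_tree_step E x p <= tau (last x p).
Proof.
elim: p x => [|y p IH] x /=; first by rewrite addn0.
case/andP => Hs Hp. rewrite hts_cons. have := tau_step Ht Hs. have := IH _ Hp.
case: (tree_arc E x y); case: (has_tree_step E y p) => /= h1 h2; lia.
Qed.

Lemma ii_i : no_tree_cycle_in_Nstar E -> strongly_time_consistent E.
Proof.
move=> Hn x y p Hp Hl Ht [h /and3P [hh Exh Eyh]]. apply: Hn. exists x, (p ++ [:: h; x]). split.
- by rewrite -size_eq0 size_cat addn2.
- by rewrite cat_path Hp /= Hl /Estar Eyh /network_arc Exh hh !orbT.
- by rewrite last_cat.
- by rewrite hts_cat Ht.
Qed.

Lemma hts_split x p : has_tree_step E x p ->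
  exists p1 b p2, p = p1 ++ b :: p2 /\ tree_arc E (last x p1) b.
Proof.
elim: p x => [|y p IH] x; first by rewrite hts_nil.
rewrite hts_cons => /orP [H|H].
- by exists [::], y, p.
- have [p1 [b [p2 [-> Hb]]]] := IH _ H. by exists (y :: p1), b, p2.
Qed.

Lemma find_FB q w a : E w a -> path (Estar E) a q -> ~~ path E a q ->
  exists q1 h x q2, a :: q = q1 ++ h :: x :: q2 /\ E (last w q1) h /\ network_arc E x h.
Proof.
elim: q w a => [|b q IH] w a Ewa /=; first by move=> _ /negP.
case/andP => Hab Hp. case Eab: (E a b) => /= nP.
- have [q1 [h [x [q2 [Hq [Eh Hnet]]]]]] := IH a b Eab Hp nP.
  exists (a :: q1), h, x, q2. by rewrite Hq.
- have Hn : network_arc E b a by move: Hab; rewrite /Estar Eab.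
  by exists [::], a, b, q.
Qed.

Lemma i_ii (Hac : ~ has_cycle E) : strongly_time_consistent E -> no_tree_cycle_in_Nstar E.
Proof.
move=> Hs [x [p [Hne Hp Hl Ht]]].
have [p1 [v [p2 [Hpe Huv]]]] := hts_split Ht.
set u := last x p1 in Huv.
have Hc : path (Estar E) u (v :: p2 ++ p1) /\ last v (p2 ++ p1) = u.
  move: Hp Hl; rewrite Hpe cat_path => /andP [Hp1 Hp2] Hl.
  have Hl2 : last v p2 = x by move: Hl; rewrite last_cat.
  rewrite last_cat Hl2; split => //.
  by rewrite -cat_cons cat_path Hp2 /= Hl2 Hp1.
case: Hc => Hc Hlc.
have Euv : E u v by case/andP: Huv.
have nE : ~~ path E v (p2 ++ p1).
  apply/negP => HE. apply: Hac. exists u, (v :: p2 ++ p1). split => //.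
  by rewrite /= HE Euv.
have Hc' : path (Estar E) v (p2 ++ p1) by case/andP: Hc.
have [q1 [h [y [q2 [Hq [Eh Hnet]]]]]] := find_FB Euv Hc' nE.
move: Hc Hlc; rewrite -[last v _]/(last u (v :: p2 ++ p1)) Hq.
case: q1 Hq Eh => [|v' q1'] Hq Eh.
- case: Hq => Hvh _. move: Huv Hnet; rewrite Hvh /tree_arc /network_arc hybridN.
  by case/andP => _ ->; rewrite andbF.
- case: Hq => Hvv _. rewrite cat_path last_cat => /andP [Hp1 /= /and3P [_ _ Hp2]] Hlq.
  apply: (Hs y (last u (v' :: q1')) (q2 ++ v' :: q1')).
  + by rewrite cat_path Hp2 Hlq Hp1.
  + by rewrite last_cat Hlq.
  + by rewrite hts_cat Hlq hts_cons -Hvv Huv orbT.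
  + exists h. case/andP: Hnet => Eyh hh. by rewrite hh Eyh Eh.
Qed.

Lemma reach (Hr : rooted_DAG E) r z : is_root E r -> exists p, path E r p /\ last r p = z.
Proof.
case: Hr => Hac [r0 [Hr0 Hu]] Hr.
rewrite (Hu _ Hr).
pose Anc z := [set w | pb (exists p, p != [::] /\ path E w p /\ last w p = z)].
have key : forall z, ~~ is_root E z -> exists2 u, E u z & #|Anc u| < #|Anc z|.
  move=> z' Hz. have : 0 < indeg E z' by rewrite lt0n.
  rewrite /indeg => /card_gt0P [u]; rewrite inE => Euz.
  exists u => //. apply: proper_card. apply/properP; split.
  - apply/subsetP => w; rewrite !inE => /pbP [p [Hne [Hp Hl]]]; apply/pbP.
    exists (rcons p z'); split; [|split].
    + by rewrite -size_eq0 size_rcons.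
    + by rewrite rcons_path Hp Hl Euz.
    + by rewrite last_rcons.
  - exists u; rewrite !inE.
    + apply/pbP; exists [:: z']; split => //=; by rewrite Euz.
    + apply/pbP => [[p [Hne [Hp Hl]]]]. apply: Hac. by exists u, p.
suff: forall n z, #|Anc z| <= n -> exists p, path E r0 p /\ last r0 p = z.
  by move/(_ #|Anc z| z (leqnn _)).
elim=> [|n IH] z' Hn; (case Hz: (is_root E z'); first by exists [::]; split => //=; rewrite (Hu _ Hz));
  have [u Euz Hlt] := key z' (negbT Hz).
- by have := leq_trans Hlt Hn; rewrite ltn0.
- have Hle : #|Anc u| <= n by rewrite -ltnS (leq_trans Hlt Hn).
  have [p [Hp Hl]] := IH u Hle.
  exists (rcons p z'); by rewrite rcons_path Hp Hl Euz last_rcons.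
Qed.

Lemma ii_iii (Hr : rooted_DAG E) : no_tree_cycle_in_Nstar E ->
  exists tau, temporal_representation E tau.
Proof.
move=> Hn.
pose D v := [set w | pb (exists p, path (Estar E) w p /\ last w p = v /\ has_tree_step E w p)].
exists (fun v => #|D v|). split.
- move=> r Hr'. apply/eqP; rewrite cards_eq0; apply/eqP/setP => w; rewrite !inE.
  apply/pbP => [[p [Hp [Hl Ht]]]].
  have [q [Hq Hlq]] := reach Hr w Hr'.
  apply: Hn. exists r, (q ++ p). split.
  + move: (hts_sub Ht); rewrite -!size_eq0 size_cat addn_eq0 => /negbTE ->.
    by rewrite andbF.
  + rewrite cat_path Hlq Hp andbT; apply: sub_path Hq => a b hab; by rewrite /Estar hab.
  + by rewrite last_cat Hlq Hl.
  + by rewrite hts_cat Hlq Ht orbT.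
- move=> u v Huv. have Euv : E u v by case/andP: Huv.
  apply: proper_card; apply/properP; split.
  + apply/subsetP => w; rewrite !inE => /pbP [p [Hp [Hl Ht]]]; apply/pbP.
    exists (rcons p v); split; first by rewrite rcons_path Hp Hl /Estar Euv.
    by rewrite last_rcons -cats1 hts_cat Ht; split.
  + exists u; rewrite !inE.
    * apply/pbP; exists [:: v]; split => //=; first by rewrite /Estar Euv.
      by split => //; rewrite hts_cons Huv.
    * apply/pbP => [[p [Hp [Hl Ht]]]]; apply: Hn; exists u, p; split => //; exact: hts_sub Ht.
- move=> u v Huv. have Euv : E u v by case/andP: Huv.
  apply/eqP; rewrite eqn_leq; apply/andP; split; apply: subset_leq_card;
    apply/subsetP => w; rewrite !inE => /pbP [p [Hp [Hl Ht]]]; apply/pbP.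
  + exists (rcons p v); split; first by rewrite rcons_path Hp Hl /Estar Euv.
    by rewrite last_rcons -cats1 hts_cat Ht; split.
  + exists (rcons p u); split; first by rewrite rcons_path Hp Hl /Estar Huv orbT.
    by rewrite last_rcons -cats1 hts_cat Ht; split.
Qed.

End S.

Theorem proposition1 (V : finType) (E : rel V) :
  rooted_DAG E ->
  (strongly_time_consistent E <-> no_tree_cycle_in_Nstar E) /\
  (no_tree_cycle_in_Nstar E <-> exists tau : V -> nat, temporal_representation E tau).
Proof.
move=> Hr; case: (Hr) => Hac _. split; split.
- exact: i_ii Hac.
- exact: ii_i.
- exact: ii_iii Hr.
- case=> tau Ht [x [p [Hne Hp Hl Htr]]]. have := tau_path Ht Hp.
  by rewrite Hl Htr addn1 ltnn.
Qed.
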